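(* Let $c<0$, $k>0$ and $R>0$, and let $f(x)=\sum_{n=0}^\infty b_nx^n$ with $b_n=\frac{(-c/4)^n}{n!\,(k,n)}$ (a series converging for all real $x$). Then: (1) $t\mapsto\log f(Re^{-t})$ is convex on $(0,\infty)$, so that $f(\sqrt{xy})\le\sqrt{f(x)f(y)}$ for all $x,y\in(0,\infty)$, with equality if and only if $x=y$. (2) $\log f(x)$ is concave on $(0,\infty)$, so that $\sqrt{f(x)f(y)}\le f((x+y)/2)$ for all $x,y\in(0,\infty)$, with equality if and only if $x=y$. (3) $f$ is convex on $(0,\infty)$, so that $f((x+y)/2)\le\frac12(f(x)+f(y))$ for all $x,y\in(0,\infty)$, with equality if and only if $x=y$. (4) If $k>-1-cR/4$, then $t\mapsto f(R(1-e^{-t}))$ is concave on $(0,\infty)$, so that $\frac{f(x)+f(y)}{2}\le f\big(R-\sqrt{(R-x)(R-y)}\big)$ for all $x,y\in(0,R)$, with equality if and only if $x=y$.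
   Context: $(k,0)=1$ and $(k,n)=k(k+1)\cdots(k+n-1)$ for $n\ge1$. The function $f$ is the generalized-normalized Bessel function of the first kind of order $p$, with $k=p+(b+1)/2$ for real parameters $p,b$. *)

(* Defs.v *)
From Stdlib Require Import Reals.
From Coquelicot Require Import Coquelicot.
Open Scope R_scope.

Fixpoint poch (k : R) (n : nat) : R :=
  match n with
  | O => 1
  | S m => poch k m * (k + INR m)
  end.

Definition bcoef (c k : R) (n : nat) : R :=
  (- c / 4) ^ n / (INR (Stdlib.Arith.Factorial.fact n) * poch k n).

Definition fB (c k : R) (x : R) : R := PSeries (bcoef c k) x.

Definition convex_pos (g : R -> R) : Prop :=
  forall x y t, 0 < x -> 0 < y -> 0 <= t <= 1 ->
    g (t * x + (1 - t) * y) <= t * g x + (1 - t) * g y.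

Definition concave_pos (g : R -> R) : Prop :=
  forall x y t, 0 < x -> 0 < y -> 0 <= t <= 1 ->
    t * g x + (1 - t) * g y <= g (t * x + (1 - t) * y).

(* Main.v *)
Require Import Defs.
From Stdlib Require Import Reals.
From Coquelicot Require Import Coquelicot.
Open Scope R_scope.
From Stdlib Require Import Lra Lia.


Lemma poch_pos k n : 0 < k -> 0 < poch k n.
Proof.
  intros hk; induction n as [|n IH]; simpl; [lra|].
  apply Rmult_lt_0_compat; [exact IH|]. pose proof (pos_INR n); lra.
Qed.

Lemma bpos c k n : c < 0 -> 0 < k -> 0 < bcoef c k n.
Proof.
  intros hc hk; unfold bcoef. apply Rdiv_lt_0_compat.
  - apply pow_lt; lra.
  - apply Rmult_lt_0_compat; [apply INR_fact_lt_0|apply poch_pos; exact hk].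
Qed.

Lemma bS c k n : c < 0 -> 0 < k ->
  bcoef c k (S n) = (-c/4) / (INR (S n) * (k + INR n)) * bcoef c k n.
Proof.
  intros hc hk. unfold bcoef. rewrite fact_simpl, mult_INR. simpl poch. simpl pow.
  pose proof (INR_fact_lt_0 n). pose proof (poch_pos k n hk). pose proof (pos_INR n).
  rewrite S_INR. field. repeat split; lra.
Qed.

Lemma b1_eq c k n : c < 0 -> 0 < k ->
  PS_derive (bcoef c k) n = (-c/4) / (k + INR n) * bcoef c k n.
Proof.
  intros hc hk. unfold PS_derive. rewrite bS by assumption.
  pose proof (pos_INR n). rewrite S_INR. field. lra.
Qed.

Lemma b2_eq c k n : c < 0 -> 0 < k ->
  PS_derive (PS_derive (bcoef c k)) n = (-c/4) / (k + INR n + 1) * PS_derive (bcoef c k) n.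
Proof.
  intros hc hk. unfold PS_derive at 1. rewrite b1_eq by assumption.
  unfold PS_derive. pose proof (pos_INR n). rewrite !S_INR. field. lra.
Qed.

Lemma CVb c k : c < 0 -> 0 < k -> CV_radius (bcoef c k) = p_infty.
Proof.
  intros hc hk. apply CV_radius_infinite_DAlembert.
  - intros n; pose proof (bpos c k n hc hk); lra.
  - apply is_lim_seq_le_le with (u := fun _ => 0) (w := fun n => (-c/4/k) * / INR (S n)).
    + intros n. rewrite bS by assumption.
      pose proof (bpos c k n hc hk). pose proof (pos_INR n).
      replace ((-c/4) / (INR (S n) * (k + INR n)) * bcoef c k n / bcoef c k n)
        with ((-c/4) / (INR (S n) * (k + INR n))) by (field; rewrite S_INR; lra).
      rewrite Rabs_right.
      * split.
        -- apply Rlt_le, Rdiv_lt_0_compat; [lra|]. rewrite S_INR; apply Rmult_lt_0_compat; lra.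
        -- rewrite S_INR. replace (-c/4/k * / (INR n + 1)) with ((-c/4) / ((INR n + 1) * k)) by (field; lra).
           unfold Rdiv. apply Rmult_le_compat_l; [lra|].
           apply Rinv_le_contravar; [apply Rmult_lt_0_compat; lra|]. apply Rmult_le_compat_l; lra.
      * apply Rle_ge, Rlt_le, Rdiv_lt_0_compat; [lra|]. rewrite S_INR; apply Rmult_lt_0_compat; lra.
    + apply is_lim_seq_const.
    + replace (Finite 0) with (Rbar_mult (-c/4/k) 0) by (simpl; f_equal; ring).
      apply is_lim_seq_scal_l.
      apply (is_lim_seq_incr_1 (fun n => / INR n)).
      replace (Finite 0) with (Rbar_inv p_infty) by reflexivity.
      apply is_lim_seq_inv; [apply is_lim_seq_INR| discriminate].
Qed.

Lemma exs_minus (u v : nat -> R) : ex_series u -> ex_series v -> ex_series (fun n => u n - v n).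
Proof.
  intros hu hv. apply ex_series_ext with (a := fun n => plus (u n) (scal (-1) (v n))).
  - intros n. unfold plus, scal; simpl. unfold mult; simpl. change (Rplus (u n) ((-1) * v n) = u n - v n). ring.
  - apply (@ex_series_plus R_AbsRing R_NormedModule); [exact hu|]. apply (@ex_series_scal R_AbsRing R_NormedModule); exact hv.
Qed.

Lemma exs_lin (u v : nat -> R) (p q : R) : ex_series u -> ex_series v -> ex_series (fun n => p * u n + q * v n).
Proof.
  intros hu hv. apply ex_series_ext with (a := fun n => plus (scal p (u n)) (scal q (v n))).
  - intros n. reflexivity.
  - apply (@ex_series_plus R_AbsRing R_NormedModule); apply (@ex_series_scal R_AbsRing R_NormedModule); assumption.
Qed.

Lemma series_nonneg (d : nat -> R) : (forall n, 0 <= d n) -> ex_series d -> 0 <= Series d.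
Proof.
  intros hd he. assert (H := Series_scal_l 0 d). rewrite Rmult_0_l in H. rewrite <- H.
  apply Series_le; [|exact he]. intros n; specialize (hd n); split; lra.
Qed.

Lemma series_lt (u v : nat -> R) n0 : (forall n, u n <= v n) -> u n0 < v n0 ->
  ex_series u -> ex_series v -> Series u < Series v.
Proof.
  intros hle hlt hu hv.
  set (d := fun n => v n - u n).
  assert (hd : ex_series d) by (apply exs_minus; assumption).
  assert (Hm : Series d = Series v - Series u) by (apply Series_minus; assumption).
  assert (Hs := Series_incr_n d (S n0) (Nat.lt_0_succ n0) hd). simpl pred in Hs.
  assert (h1 : d n0 <= sum_f_R0 d n0).
  { destruct n0 as [|m]; simpl; [lra|].
    assert (0 <= sum_f_R0 d m) by (apply cond_pos_sum; intros; unfold d; specialize (hle n); lra). lra. }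
  assert (h2 : 0 <= Series (fun k => d (S n0 + k)%nat)).
  { apply series_nonneg. intros; unfold d; specialize (hle (S n0 + n)%nat); lra.
    apply (ex_series_incr_n d (S n0)); exact hd. }
  unfold d at 1 in h1. lra.
Qed.

Lemma series_pos (u : nat -> R) : (forall n, 0 <= u n) -> 0 < u O -> ex_series u -> 0 < Series u.
Proof.
  intros h0 h1 he. assert (H := Series_scal_l 0 u). rewrite Rmult_0_l in H. rewrite <- H.
  apply series_lt with O; [intros n; specialize (h0 n); lra|lra| |exact he].
  apply ex_series_ext with (a := fun n => scal 0 (u n)); [reflexivity|]. apply (@ex_series_scal R_AbsRing R_NormedModule); exact he.
Qed.

Lemma exps (a : nat -> R) x : CV_radius a = p_infty -> ex_series (fun n => a n * x ^ n).
Proof.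
  intros h. apply ex_pseries_R. apply CV_radius_inside. rewrite h. exact I.
Qed.

Lemma dps (a : nat -> R) x : CV_radius a = p_infty -> is_derive (PSeries a) x (PSeries (PS_derive a) x).
Proof. intros h. apply is_derive_PSeries. rewrite h. exact I. Qed.

Lemma ps_pos (a : nat -> R) x : CV_radius a = p_infty -> (forall n, 0 < a n) -> 0 <= x -> 0 < PSeries a x.
Proof.
  intros h ha hx. unfold PSeries. apply series_pos.
  - intros n. apply Rmult_le_pos; [apply Rlt_le, ha| apply pow_le, hx].
  - simpl. rewrite Rmult_1_r. apply ha.
  - apply exps, h.
Qed.

Lemma incr_of_pos (h h' : R -> R) :
  (forall x, 0 < x -> derivable_pt_lim h x (h' x)) -> (forall x, 0 < x -> 0 < h' x) ->
  forall x y, 0 < x -> x < y -> h x < h y.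
Proof.
  intros hd hp x y hx hxy.
  destruct (MVT_cor2 h h' x y hxy) as [z [hz1 hz2]].
  - intros z hz; apply hd; lra.
  - assert (0 < h' z) by (apply hp; lra). nra.
Qed.

Lemma convex_strict (g g' : R -> R) :
  (forall x, 0 < x -> derivable_pt_lim g x (g' x)) -> (forall x y, 0 < x -> x < y -> g' x < g' y) ->
  forall x y t, 0 < x -> x < y -> 0 < t < 1 -> g (t*x + (1-t)*y) < t * g x + (1-t) * g y.
Proof.
  intros hd hi x y t hx hxy ht.
  set (z := t*x + (1-t)*y).
  assert (hz1 : x < z) by (unfold z; nra). assert (hz2 : z < y) by (unfold z; nra).
  destruct (MVT_cor2 g g' x z hz1) as [p [hp1 hp2]]; [intros; apply hd; lra|].
  destruct (MVT_cor2 g g' z y hz2) as [q [hq1 hq2]]; [intros; apply hd; lra|].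
  assert (hpq : g' p < g' q) by (apply hi; lra).
  assert (e1 : z - x = (1-t)*(y-x)) by (unfold z; ring).
  assert (e2 : y - z = t*(y-x)) by (unfold z; ring).
  rewrite e1 in hp1. rewrite e2 in hq1.
  assert (0 < t*(1-t)*(y-x)*(g' q - g' p)).
  { apply Rmult_lt_0_compat; [|lra]. apply Rmult_lt_0_compat; [|lra]. apply Rmult_lt_0_compat; lra. }
  assert (t * g x + (1-t) * g y - g z = t*(1-t)*(y-x)*(g' q - g' p)).
  { replace (g x) with (g z - g' p * ((1-t)*(y-x))) by lra.
    replace (g y) with (g z + g' q * (t*(y-x))) by lra. ring. }
  lra.
Qed.

Lemma convex_pack (g g' : R -> R) :
  (forall x, 0 < x -> derivable_pt_lim g x (g' x)) -> (forall x y, 0 < x -> x < y -> g' x < g' y) ->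
  convex_pos g /\ forall x y, 0 < x -> 0 < y -> x <> y -> g ((x+y)/2) < (g x + g y)/2.
Proof.
  intros hd hi. pose proof (convex_strict g g' hd hi) as S. split.
  - intros x y t hx hy ht.
    destruct (Req_dec t 0) as [->|ht0].
    { replace (0*x + (1-0)*y) with y by ring. lra. }
    destruct (Req_dec t 1) as [->|ht1].
    { replace (1*x + (1-1)*y) with x by ring. lra. }
    destruct (Rtotal_order x y) as [hxy|[->|hxy]].
    + apply Rlt_le, S; lra.
    + replace (t*y + (1-t)*y) with y by ring. lra.
    + replace (t*x + (1-t)*y) with ((1-t)*y + (1-(1-t))*x) by ring.
      replace (t * g x + (1-t) * g y) with ((1-t) * g y + (1-(1-t)) * g x) by ring.
      apply Rlt_le, S; lra.
  - intros x y hx hy hxy.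
    destruct (Rtotal_order x y) as [h|[h|h]]; [|contradiction|].
    + replace ((x+y)/2) with (/2*x + (1-/2)*y) by field.
      replace ((g x + g y)/2) with (/2*g x + (1-/2)*g y) by field. apply S; lra.
    + replace ((x+y)/2) with (/2*y + (1-/2)*x) by field.
      replace ((g x + g y)/2) with (/2*g y + (1-/2)*g x) by field. apply S; lra.
Qed.

Lemma concave_pack (g g' : R -> R) :
  (forall x, 0 < x -> derivable_pt_lim g x (g' x)) -> (forall x y, 0 < x -> x < y -> g' y < g' x) ->
  concave_pos g /\ forall x y, 0 < x -> 0 < y -> x <> y -> (g x + g y)/2 < g ((x+y)/2).
Proof.
  intros hd hi.
  destruct (convex_pack (fun x => - g x) (fun x => - g' x)) as [H1 H2].
  - intros x hx. apply derivable_pt_lim_opp with (f := g). apply hd, hx.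
  - intros x y hx hxy. specialize (hi x y hx hxy). lra.
  - split.
    + intros x y t hx hy ht. specialize (H1 x y t hx hy ht). simpl in H1. lra.
    + intros x y hx hy hxy. specialize (H2 x y hx hy hxy). simpl in H2. lra.
Qed.

Lemma turan_abstract (F F1 F2 : R -> R) (a k : R) : 0 < a -> 0 < k ->
  (forall y, is_derive F y (F1 y)) -> (forall y, is_derive F1 y (F2 y)) ->
  (forall y, 0 <= y -> 0 < F y) -> (forall y, 0 <= y -> 0 < F1 y) ->
  (forall y, y * F2 y = a * F y - k * F1 y) -> F 0 = 1 -> F1 0 = a / k ->
  forall x, 0 < x -> 0 < F1 x * F1 x - F x * F2 x.
Proof.
  intros ha hk dF dF1 pF pF1 ode F0 F10.
  set (phi := fun y => y * (F1 y * F1 y) + k * F y * F1 y - a * (F y * F y)).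
  set (phi' := fun y => F1 y * F1 y + y * (2 * F1 y * F2 y) + k * (F1 y * F1 y + F y * F2 y) - a * (2 * F y * F1 y)).
  assert (dphi : forall y, is_derive phi y (phi' y)).
  { intros y. unfold phi, phi'. auto_derive.
    - repeat split; eexists; eauto.
    - replace (Derive (fun x0 => F x0) y) with (F1 y) by (symmetry; apply is_derive_unique; auto).
      replace (Derive (fun x0 => F1 x0) y) with (F2 y) by (symmetry; apply is_derive_unique; auto).
      ring. }
  assert (key : forall y, y * phi' y + k * phi y = y * (F1 y * F1 y)).
  { intros y. unfold phi, phi'. assert (E := ode y).
    apply Rminus_diag_uniq.
    transitivity ((2*y*F1 y + k*F y)*(y*F2 y - (a*F y - k*F1 y))).
    - ring.
    - rewrite E. ring. }
  set (Phi := fun y => Rpower y k * phi y).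
  assert (dPhi : forall y, 0 < y -> derivable_pt_lim Phi y (Rpower y k * F1 y * F1 y)).
  { intros y hy. unfold Phi.
    replace (Rpower y k * F1 y * F1 y) with ((k * Rpower y (k - 1)) * phi y + Rpower y k * phi' y).
    - apply (derivable_pt_lim_mult (fun y => Rpower y k) phi).
      + apply derivable_pt_lim_power; exact hy.
      + apply is_derive_Reals, dphi.
    - replace (k - 1) with (k + - (1)) by ring. rewrite Rpower_plus, Rpower_Ropp, Rpower_1 by exact hy.
      assert (E := key y).
      replace (k * (Rpower y k * / y) * phi y + Rpower y k * phi' y)
        with (Rpower y k * / y * (y * phi' y + k * phi y)) by (field; lra).
      rewrite E. field. lra. }
  assert (Phi_inc : forall x y, 0 < x -> x < y -> Phi x < Phi y).
  { apply incr_of_pos with (h' := fun y => Rpower y k * F1 y * F1 y); [exact dPhi|].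
    intros y hy. assert (0 < Rpower y k) by (unfold Rpower; apply exp_pos).
    assert (0 < F1 y) by (apply pF1; lra).
    apply Rmult_lt_0_compat; [apply Rmult_lt_0_compat|]; assumption. }
  assert (phi0 : phi 0 = 0).
  { unfold phi. rewrite F0, F10. field. lra. }
  assert (cont : continuity_pt phi 0).
  { apply derivable_continuous_pt. exists (phi' 0). apply is_derive_Reals, dphi. }
  assert (Phi_nn : forall x, 0 < x -> 0 <= Phi x).
  { intros x hx. destruct (Rle_or_lt 0 (Phi x)) as [h|h]; [exact h|exfalso].
    destruct (cont (- Phi x)) as [eta [heta H]]; [lra|].
    set (e := Rmin (eta/2) (Rmin (x/2) 1)).
    assert (he0 : 0 < e) by (unfold e; repeat apply Rmin_pos; lra).
    assert (he1 : e <= eta/2) by (unfold e; apply Rmin_l).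
    assert (he2 : e <= x/2) by (unfold e; eapply Rle_trans; [apply Rmin_r|apply Rmin_l]).
    assert (he3 : e <= 1) by (unfold e; eapply Rle_trans; [apply Rmin_r|apply Rmin_r]).
    specialize (H e). simpl in H. unfold R_dist in H. rewrite phi0 in H.
    assert (Hd : Rabs (phi e - 0) < - Phi x).
    { apply H. split; [split; [exact I|lra]|]. rewrite Rminus_0_r, Rabs_right; lra. }
    rewrite Rminus_0_r in Hd.
    assert (hp1 : Rpower e k <= 1).
    { unfold Rpower. rewrite <- exp_0. destruct (Req_dec e 1) as [->|hne].
      - rewrite ln_1, Rmult_0_r. lra.
      - apply Rlt_le, exp_increasing. assert (ln e < 0).
        { rewrite <- ln_1. apply ln_increasing; lra. } nra. }
    assert (hp2 : 0 < Rpower e k) by (unfold Rpower; apply exp_pos).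
    assert (Phi e < Phi x) by (apply Phi_inc; lra).
    unfold Phi at 1 in H0.
    assert (- Rabs (phi e) <= phi e) by (apply Rabs_maj2 || (pose proof (Rabs_maj2 (phi e)); lra)).
    assert (Rpower e k * phi e >= - Rabs (phi e)).
    { destruct (Rle_or_lt 0 (phi e)).
      - assert (0 <= Rpower e k * phi e) by (apply Rmult_le_pos; lra). pose proof (Rabs_pos (phi e)). lra.
      - rewrite Rabs_left by lra. nra. }
    lra. }
  intros x hx.
  assert (hphi : 0 < phi x).
  { assert (Phi (x/2) < Phi x) by (apply Phi_inc; lra).
    assert (0 <= Phi (x/2)) by (apply Phi_nn; lra).
    unfold Phi in *. assert (0 < Rpower x k) by (unfold Rpower; apply exp_pos).
    destruct (Rle_or_lt (phi x) 0); [|assumption]. nra. }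
  assert (x * (F1 x * F1 x - F x * F2 x) = phi x).
  { unfold phi. replace (x * (F1 x * F1 x - F x * F2 x)) with (x * (F1 x * F1 x) - F x * (x * F2 x)) by ring.
    rewrite ode. ring. }
  destruct (Rle_or_lt (F1 x * F1 x - F x * F2 x) 0); [|assumption]. nra.
Qed.


Lemma expconv u v t : 0 <= t <= 1 ->
  exp (t*u + (1-t)*v) <= t * exp u + (1-t) * exp v /\
  (0 < t < 1 -> u <> v -> exp (t*u + (1-t)*v) < t * exp u + (1-t) * exp v).
Proof.
  intros ht. set (m := t*u + (1-t)*v).
  assert (Eu : exp u = exp m * exp (u - m)) by (rewrite <- exp_plus; f_equal; ring).
  assert (Ev : exp v = exp m * exp (v - m)) by (rewrite <- exp_plus; f_equal; ring).
  assert (hm : 0 < exp m) by apply exp_pos.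
  pose proof (exp_ineq1_le (u - m)). pose proof (exp_ineq1_le (v - m)).
  assert (Hs : t * exp u + (1-t) * exp v - exp m = exp m * (t * (exp (u-m) - (1 + (u - m))) + (1-t) * (exp (v-m) - (1 + (v-m))))).
  { rewrite Eu, Ev. unfold m. ring. }
  split.
  - assert (0 <= t * (exp (u-m) - (1 + (u - m))) + (1-t) * (exp (v-m) - (1 + (v-m)))).
    { apply Rplus_le_le_0_compat; apply Rmult_le_pos; lra. }
    assert (0 <= exp m * (t * (exp (u-m) - (1 + (u - m))) + (1-t) * (exp (v-m) - (1 + (v-m))))) by (apply Rmult_le_pos; lra).
    lra.
  - intros ht' huv.
    assert (u - m <> 0) by (unfold m; intro h; apply huv; nra).
    pose proof (exp_ineq1 (u - m) H1).
    assert (0 < t * (exp (u-m) - (1 + (u - m))) + (1-t) * (exp (v-m) - (1 + (v-m)))).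
    { apply Rplus_lt_le_0_compat; [apply Rmult_lt_0_compat|apply Rmult_le_pos]; lra. }
    assert (0 < exp m * (t * (exp (u-m) - (1 + (u - m))) + (1-t) * (exp (v-m) - (1 + (v-m))))) by (apply Rmult_lt_0_compat; lra).
    lra.
Qed.

Lemma amgm p q t : 0 < p -> 0 < q -> 0 <= t <= 1 ->
  exp (t * ln p + (1-t) * ln q) <= t * p + (1-t) * q /\
  (0 < t < 1 -> p <> q -> exp (t * ln p + (1-t) * ln q) < t * p + (1-t) * q).
Proof.
  intros hp hq ht. destruct (expconv (ln p) (ln q) t ht) as [H1 H2].
  rewrite !exp_ln in H1, H2 by assumption. split; [exact H1|].
  intros ht' hpq. apply H2; [exact ht'|]. intro h. apply hpq. apply ln_inv; assumption.
Qed.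

Lemma sqrt_exp p q : 0 < p -> 0 < q -> sqrt (p * q) = exp (/2 * ln p + (1 - /2) * ln q).
Proof.
  intros hp hq. set (e := exp (/2 * ln p + (1 - /2) * ln q)).
  assert (p * q = e * e).
  { unfold e. rewrite <- exp_plus. replace (/ 2 * ln p + (1 - / 2) * ln q + (/ 2 * ln p + (1 - / 2) * ln q)) with (ln p + ln q) by field.
    rewrite exp_plus, !exp_ln; auto. }
  rewrite H. apply sqrt_square. unfold e. apply Rlt_le, exp_pos.
Qed.

Lemma holder (b : nat -> R) X Y t : CV_radius b = p_infty -> (forall n, 0 < b n) ->
  0 < X -> 0 < Y -> 0 <= t <= 1 ->
  PSeries b (exp (t*ln X + (1-t)*ln Y)) <= exp (t*ln (PSeries b X) + (1-t)*ln (PSeries b Y)) /\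
  (0 < t < 1 -> X <> Y ->
  PSeries b (exp (t*ln X + (1-t)*ln Y)) < exp (t*ln (PSeries b X) + (1-t)*ln (PSeries b Y))).
Proof.
  intros hcv hb hX hY ht.
  set (A := PSeries b X). set (B := PSeries b Y).
  set (Z := exp (t*ln X + (1-t)*ln Y)). set (M := exp (t*ln A + (1-t)*ln B)).
  assert (hA : 0 < A) by (apply ps_pos; auto; lra).
  assert (hB : 0 < B) by (apply ps_pos; auto; lra).
  assert (hZ : 0 < Z) by apply exp_pos. assert (hM : 0 < M) by apply exp_pos.
  set (u := fun n => b n * X ^ n). set (w := fun n => b n * Y ^ n).
  assert (hu : forall n, 0 < u n) by (intros; unfold u; apply Rmult_lt_0_compat; [auto|apply pow_lt; lra]).
  assert (hw : forall n, 0 < w n) by (intros; unfold w; apply Rmult_lt_0_compat; [auto|apply pow_lt; lra]).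
  assert (term : forall n, b n * Z ^ n = M * exp (t * ln (u n / A) + (1-t) * ln (w n / B))).
  { intros n. unfold M. rewrite <- exp_plus.
    assert (0 < b n * Z ^ n) by (apply Rmult_lt_0_compat; [auto|apply pow_lt; lra]).
    rewrite <- (exp_ln (b n * Z ^ n)) by assumption. f_equal.
    unfold u, w, Rdiv.
    rewrite !ln_mult; try (apply Rmult_lt_0_compat); try apply Rinv_0_lt_compat; try apply pow_lt; auto.
    rewrite !ln_Rinv by assumption. rewrite !ln_pow by assumption. unfold Z. rewrite ln_exp. ring. }
  set (rhs := fun n => (M*t/A) * u n + (M*(1-t)/B) * w n).
  assert (bound : forall n, b n * Z ^ n <= rhs n /\ (0 < t < 1 -> u n / A <> w n / B -> b n * Z ^ n < rhs n)).
  { intros n. rewrite term. unfold rhs.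
    assert (hp : 0 < u n / A) by (apply Rdiv_lt_0_compat; auto).
    assert (hq : 0 < w n / B) by (apply Rdiv_lt_0_compat; auto).
    destruct (amgm (u n / A) (w n / B) t hp hq ht) as [H1 H2].
    replace ((M*t/A) * u n + (M*(1-t)/B) * w n) with (M * (t * (u n / A) + (1-t) * (w n / B))) by (field; lra).
    split.
    - apply Rmult_le_compat_l; lra.
    - intros h1 h2. apply Rmult_lt_compat_l; [lra|]. apply H2; assumption. }
  assert (exu : ex_series u) by (apply exps; auto).
  assert (exw : ex_series w) by (apply exps; auto).
  assert (exr : ex_series rhs) by (apply exs_lin; auto).
  assert (exl : ex_series (fun n => b n * Z ^ n)) by (apply exps; auto).
  assert (Srhs : Series rhs = M).
  { unfold rhs. rewrite Series_plus.
    - rewrite !Series_scal_l. change (Series u) with A. change (Series w) with B. field; lra.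
    - apply ex_series_ext with (a := fun n => scal (M*t/A) (u n)); [reflexivity|].
      apply (@ex_series_scal R_AbsRing R_NormedModule); exact exu.
    - apply ex_series_ext with (a := fun n => scal (M*(1-t)/B) (w n)); [reflexivity|].
      apply (@ex_series_scal R_AbsRing R_NormedModule); exact exw. }
  split.
  - rewrite <- Srhs. unfold PSeries. apply Series_le; [|exact exr].
    intros n. split; [|apply bound]. apply Rmult_le_pos; [apply Rlt_le, hb|apply pow_le; lra].
  - intros ht' hXY. rewrite <- Srhs. unfold PSeries.
    assert (exists n0, u n0 / A <> w n0 / B) as [n0 hn0].
    { destruct (Req_dec (u O / A) (w O / B)) as [e0|e0]; [|exists O; exact e0].
      exists 1%nat. intro e1. apply hXY.
      unfold u, w in e0, e1. simpl in e0, e1.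
      assert (A = B).
      { assert (0 < b O) by auto. apply Rmult_eq_reg_l with (b O * /A * /B); [|apply Rgt_not_eq; apply Rmult_lt_0_compat; [apply Rmult_lt_0_compat|]; auto; apply Rinv_0_lt_compat; auto].
        replace (b O * / A * / B * A) with (b O * 1 / B) by (field; lra).
        replace (b O * / A * / B * B) with (b O * 1 / A) by (field; lra). lra. }
      rewrite <- H in e1. assert (0 < b 1%nat) by auto.
      apply Rmult_eq_reg_l with (b 1%nat / A); [|apply Rgt_not_eq, Rdiv_lt_0_compat; auto].
      replace (b 1%nat / A * X) with (b 1%nat * (X * 1) / A) by (field; lra).
      replace (b 1%nat / A * Y) with (b 1%nat * (Y * 1) / A) by (field; lra). exact e1. }
    apply series_lt with n0; [intros; apply bound| apply bound; auto| exact exl| exact exr].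
Qed.

Lemma part4_abstract (F F1 F2 : R -> R) R0 : 0 < R0 ->
  (forall y, is_derive F y (F1 y)) -> (forall y, is_derive F1 y (F2 y)) ->
  (forall x, 0 < x < R0 -> 0 < F1 x - (R0 - x) * F2 x) ->
  concave_pos (fun t => F (R0 * (1 - exp (- t)))) /\
  forall s u, 0 < s -> 0 < u -> s <> u ->
    (F (R0 * (1 - exp (- s))) + F (R0 * (1 - exp (- u)))) / 2 < F (R0 * (1 - exp (- ((s + u) / 2)))).
Proof.
  intros hR dF dF1 hpos.
  apply (concave_pack (fun t => F (R0 * (1 - exp (- t)))) (fun t => F1 (R0 * (1 - exp (- t))) * (R0 * exp (- t)))).
  - intros t _. apply is_derive_Reals. auto_derive.
    + repeat split. eexists; apply dF.
    + replace (Derive (fun x => F x) (R0 * (1 + - exp (- t)))) with (F1 (R0 * (1 - exp (- t))))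
        by (symmetry; apply is_derive_unique; apply dF). ring.
  - intros x y hx hxy.
    assert (H := incr_of_pos (fun t => - (F1 (R0 * (1 - exp (- t))) * (R0 * exp (- t))))
      (fun t => R0 * exp (- t) * (F1 (R0 * (1 - exp (- t))) - (R0 - R0 * (1 - exp (- t))) * F2 (R0 * (1 - exp (- t)))))).
    cut ((- (F1 (R0 * (1 - exp (- x))) * (R0 * exp (- x)))) < - (F1 (R0 * (1 - exp (- y))) * (R0 * exp (- y)))).
    { intros; lra. }
    apply H; auto.
    + intros t _. apply is_derive_Reals. auto_derive.
      * repeat split. eexists; apply dF1.
      * replace (Derive (fun x => F1 x) (R0 * (1 + - exp (- t)))) with (F2 (R0 * (1 - exp (- t))))
          by (symmetry; apply is_derive_unique; apply dF1). unfold Rminus; ring.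
    + intros t ht. apply Rmult_lt_0_compat.
      * apply Rmult_lt_0_compat; [exact hR| apply exp_pos].
      * apply hpos. assert (exp (- t) < 1) by (rewrite <- exp_0; apply exp_increasing; lra).
        pose proof (exp_pos (- t)). split; nra.
Qed.

Lemma CV1 c k : c < 0 -> 0 < k -> CV_radius (PS_derive (bcoef c k)) = p_infty.
Proof. intros; rewrite CV_radius_derive; apply CVb; auto. Qed.
Lemma CV2 c k : c < 0 -> 0 < k -> CV_radius (PS_derive (PS_derive (bcoef c k))) = p_infty.
Proof. intros; rewrite !CV_radius_derive; apply CVb; auto. Qed.

Lemma b1pos c k n : c < 0 -> 0 < k -> 0 < PS_derive (bcoef c k) n.
Proof.
  intros hc hk. rewrite b1_eq by auto. pose proof (pos_INR n). pose proof (bpos c k n hc hk).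
  apply Rmult_lt_0_compat; [apply Rdiv_lt_0_compat; lra|auto].
Qed.
Lemma b2pos c k n : c < 0 -> 0 < k -> 0 < PS_derive (PS_derive (bcoef c k)) n.
Proof.
  intros hc hk. rewrite b2_eq by auto. pose proof (pos_INR n). pose proof (b1pos c k n hc hk).
  apply Rmult_lt_0_compat; [apply Rdiv_lt_0_compat; lra|auto].
Qed.

Lemma ode c k y : c < 0 -> 0 < k ->
  y * PSeries (PS_derive (PS_derive (bcoef c k))) y =
  (-c/4) * fB c k y - k * PSeries (PS_derive (bcoef c k)) y.
Proof.
  intros hc hk. set (b := bcoef c k).
  set (cc := fun n => INR n * PS_derive b n).
  assert (ecc : forall n, cc n * y ^ n = (-c/4) * (b n * y ^ n) + (-k) * (PS_derive b n * y ^ n)).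
  { intros n. unfold cc, b. rewrite b1_eq by auto. pose proof (pos_INR n). field. lra. }
  assert (ex1 : ex_series (fun n => b n * y ^ n)) by (apply exps, CVb; auto).
  assert (ex2 : ex_series (fun n => PS_derive b n * y ^ n)) by (apply exps, CV1; auto).
  assert (exc : ex_pseries cc y).
  { apply ex_pseries_R. apply ex_series_ext with (a := fun n => (-c/4) * (b n * y ^ n) + (-k) * (PS_derive b n * y ^ n)).
    - intros; rewrite ecc; reflexivity.
    - apply exs_lin; auto. }
  assert (H := PSeries_decr_1 cc y exc).
  assert (H0 : cc O = 0) by (unfold cc; simpl; ring).
  rewrite H0, Rplus_0_l in H.
  assert (H1 : PSeries (PS_decr_1 cc) y = PSeries (PS_derive (PS_derive b)) y).
  { apply PSeries_ext. intros n. reflexivity. }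
  rewrite H1 in H. rewrite <- H.
  unfold PSeries. rewrite (Series_ext _ _ ecc). rewrite Series_plus.
  - rewrite !Series_scal_l. unfold fB, PSeries. fold b. ring.
  - apply ex_series_ext with (a := fun n => scal (-c/4) (b n * y ^ n)); [reflexivity|].
    apply (@ex_series_scal R_AbsRing R_NormedModule); exact ex1.
  - apply ex_series_ext with (a := fun n => scal (-k) (PS_derive b n * y ^ n)); [reflexivity|].
    apply (@ex_series_scal R_AbsRing R_NormedModule); exact ex2.
Qed.

Lemma F0 c k : fB c k 0 = 1.
Proof. unfold fB. rewrite PSeries_0. unfold bcoef. simpl. field. Qed.

Lemma F10 c k : c < 0 -> 0 < k -> PSeries (PS_derive (bcoef c k)) 0 = (-c/4) / k.
Proof.
  intros hc hk. rewrite PSeries_0. rewrite b1_eq by auto.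
  replace (bcoef c k 0) with 1 by (unfold bcoef; simpl; field). simpl. field. lra.
Qed.

Lemma pos4 c k R0 x : c < 0 -> 0 < k -> 0 < R0 -> k > -1 - c * R0 / 4 -> 0 < x < R0 ->
  0 < PSeries (PS_derive (bcoef c k)) x - (R0 - x) * PSeries (PS_derive (PS_derive (bcoef c k))) x.
Proof.
  intros hc hk hR hkR hx. set (b := bcoef c k).
  assert (ex1 : ex_series (fun n => PS_derive b n * x ^ n)) by (apply exps, CV1; auto).
  assert (ex2 : ex_series (fun n => PS_derive (PS_derive b) n * x ^ n)) by (apply exps, CV2; auto).
  unfold PSeries. rewrite <- Series_scal_l. rewrite <- Series_minus; auto.
  2:{ apply ex_series_ext with (a := fun n => scal (R0 - x) (PS_derive (PS_derive b) n * x ^ n)); [reflexivity|].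
      apply (@ex_series_scal R_AbsRing R_NormedModule); exact ex2. }
  assert (T : forall n, PS_derive b n * x ^ n - (R0 - x) * (PS_derive (PS_derive b) n * x ^ n)
     = PS_derive b n * x ^ n * (1 - (R0 - x) * (-c/4) / (k + INR n + 1))).
  { intros n. unfold b. rewrite b2_eq by auto. pose proof (pos_INR n). field. lra. }
  assert (Tp : forall n, 0 < 1 - (R0 - x) * (-c/4) / (k + INR n + 1)).
  { intros n. pose proof (pos_INR n).
    assert ((R0 - x) * (-c/4) < k + INR n + 1) by nra.
    assert ((R0 - x) * (-c/4) / (k + INR n + 1) < 1).
    { apply (Rmult_lt_reg_r (k + INR n + 1)); [lra|]. field_simplify; lra. }
    lra. }
  apply series_pos.
  - intros n. rewrite T. apply Rmult_le_pos; [apply Rmult_le_pos; [apply Rlt_le, b1pos; auto|apply pow_le; lra]|apply Rlt_le, Tp].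
  - rewrite T. simpl. rewrite Rmult_1_r. apply Rmult_lt_0_compat; [apply b1pos; auto|exact (Tp O)].
  - apply exs_minus; auto.
    apply ex_series_ext with (a := fun n => scal (R0 - x) (PS_derive (PS_derive b) n * x ^ n)); [reflexivity|].
    apply (@ex_series_scal R_AbsRing R_NormedModule); exact ex2.
Qed.

Lemma le_iff_of (P Q x y : R) : (x <> y -> P < Q) -> (x = y -> P = Q) -> P <= Q /\ (P = Q <-> x = y).
Proof.
  intros h1 h2. destruct (Req_dec x y) as [e|n].
  - specialize (h2 e). split; [lra|]. split; auto.
  - specialize (h1 n). split; [lra|]. split; intros; [lra|contradiction].
Qed.

Lemma part1 c k R0 : c < 0 -> 0 < k -> 0 < R0 ->
  (convex_pos (fun t => ln (fB c k (R0 * exp (- t)))) /\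
   forall x y, 0 < x -> 0 < y ->
     fB c k (sqrt (x * y)) <= sqrt (fB c k x * fB c k y) /\
     (fB c k (sqrt (x * y)) = sqrt (fB c k x * fB c k y) <-> x = y)).
Proof.
  intros hc hk hR.
  assert (hcv := CVb c k hc hk). assert (hb := fun n => bpos c k n hc hk).
  assert (Fpos : forall y, 0 <= y -> 0 < fB c k y) by (intros; apply ps_pos; auto).
  split.
  - intros x y t hx hy ht.
    assert (hX : 0 < R0 * exp (- x)) by (apply Rmult_lt_0_compat; [lra|apply exp_pos]).
    assert (hY : 0 < R0 * exp (- y)) by (apply Rmult_lt_0_compat; [lra|apply exp_pos]).
    destruct (holder (bcoef c k) (R0 * exp (- x)) (R0 * exp (- y)) t hcv hb hX hY ht) as [H _].
    assert (E : exp (t * ln (R0 * exp (- x)) + (1 - t) * ln (R0 * exp (- y))) = R0 * exp (- (t * x + (1 - t) * y))).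
    { rewrite !ln_mult by (try lra; apply exp_pos). rewrite !ln_exp.
      replace (t * (ln R0 + - x) + (1 - t) * (ln R0 + - y)) with (ln R0 + - (t * x + (1 - t) * y)) by ring.
      rewrite exp_plus, exp_ln by lra. reflexivity. }
    rewrite E in H. fold (fB c k) in H.
    apply ln_le in H; [|apply Fpos; apply Rlt_le, Rmult_lt_0_compat; [lra|apply exp_pos]].
    rewrite ln_exp in H. exact H.
  - intros x y hx hy.
    rewrite (sqrt_exp x y hx hy). rewrite (sqrt_exp (fB c k x) (fB c k y)) by (apply Fpos; lra).
    apply le_iff_of.
    + intros hxy. apply (holder (bcoef c k) x y (/2) hcv hb hx hy); [lra|lra|exact hxy].
    + intros <-. rewrite <- !sqrt_exp by (try apply Fpos; lra).
      rewrite !sqrt_square; try lra. apply Rlt_le, Fpos; lra.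
Qed.

Lemma part3 c k : c < 0 -> 0 < k ->
  (convex_pos (fB c k) /\
   forall x y, 0 < x -> 0 < y ->
     fB c k ((x + y) / 2) <= (fB c k x + fB c k y) / 2 /\
     (fB c k ((x + y) / 2) = (fB c k x + fB c k y) / 2 <-> x = y)).
Proof.
  intros hc hk.
  assert (dF : forall y, derivable_pt_lim (fB c k) y (PSeries (PS_derive (bcoef c k)) y))
    by (intros; apply is_derive_Reals, dps, CVb; auto).
  assert (dF1 : forall y, derivable_pt_lim (PSeries (PS_derive (bcoef c k))) y (PSeries (PS_derive (PS_derive (bcoef c k))) y))
    by (intros; apply is_derive_Reals, dps, CV1; auto).
  destruct (convex_pack (fB c k) (PSeries (PS_derive (bcoef c k)))) as [H1 H2].
  - intros; apply dF.
  - apply incr_of_pos with (h' := PSeries (PS_derive (PS_derive (bcoef c k)))).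
    + intros; apply dF1.
    + intros x hx. apply ps_pos; [apply CV2; auto| intros; apply b2pos; auto| lra].
  - split; [exact H1|]. intros x y hx hy. apply le_iff_of.
    + intros; apply H2; auto.
    + intros <-. replace ((x + x) / 2) with x by field. field.
Qed.

Lemma part2 c k : c < 0 -> 0 < k ->
  (concave_pos (fun x => ln (fB c k x)) /\
   forall x y, 0 < x -> 0 < y ->
     sqrt (fB c k x * fB c k y) <= fB c k ((x + y) / 2) /\
     (sqrt (fB c k x * fB c k y) = fB c k ((x + y) / 2) <-> x = y)).
Proof.
  intros hc hk.
  set (F := fB c k). set (F1 := PSeries (PS_derive (bcoef c k))). set (F2 := PSeries (PS_derive (PS_derive (bcoef c k)))).
  assert (dF : forall y, is_derive F y (F1 y)) by (intros; apply dps, CVb; auto).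
  assert (dF1 : forall y, is_derive F1 y (F2 y)) by (intros; apply dps, CV1; auto).
  assert (Fpos : forall y, 0 <= y -> 0 < F y) by (intros; apply ps_pos; auto; [apply CVb; auto|intros; apply bpos; auto]).
  assert (F1pos : forall y, 0 <= y -> 0 < F1 y) by (intros; apply ps_pos; auto; [apply CV1; auto|intros; apply b1pos; auto]).
  assert (tur := turan_abstract F F1 F2 (-c/4) k ltac:(lra) hk dF dF1 Fpos F1pos
     (fun y => ode c k y hc hk) (F0 c k) (F10 c k hc hk)).
  clearbody F F1 F2.
  destruct (concave_pack (fun x => ln (F x)) (fun x => F1 x / F x)) as [H1 H2].
  - intros x hx. apply is_derive_Reals. auto_derive.
    + repeat split; try (eexists; apply dF); apply Fpos; lra.
    + replace (Derive (fun x => F x) x) with (F1 x) by (symmetry; apply is_derive_unique; apply dF). field.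
      apply Rgt_not_eq, Fpos; lra.
  - intros x y hx hxy.
    cut (- (F1 x / F x) < - (F1 y / F y)); [intros; lra|].
    apply (incr_of_pos (fun x => - (F1 x / F x)) (fun x => (F1 x * F1 x - F x * F2 x) / (F x * F x))); [| |exact hx|exact hxy].
    + intros z hz. apply is_derive_Reals. auto_derive.
      * repeat split; try (eexists; apply dF1); try (eexists; apply dF); apply Rgt_not_eq, Fpos; lra.
      * replace (Derive (fun x => F x) z) with (F1 z) by (symmetry; apply is_derive_unique; apply dF).
        replace (Derive (fun x => F1 x) z) with (F2 z) by (symmetry; apply is_derive_unique; apply dF1).
        field. apply Rgt_not_eq, Fpos; lra.
    + intros z hz. apply Rdiv_lt_0_compat; [apply tur; lra|].
      assert (0 < F z) by (apply Fpos; lra). apply Rmult_lt_0_compat; assumption.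
  - split; [exact H1|]. intros x y hx hy.
    rewrite (sqrt_exp (F x) (F y)) by (apply Fpos; lra).
    apply le_iff_of.
    + intros hxy. specialize (H2 x y hx hy hxy). simpl in H2.
      rewrite <- (exp_ln (F ((x + y) / 2))) by (apply Fpos; lra).
      apply exp_increasing. lra.
    + intros <-. rewrite <- sqrt_exp by (apply Fpos; lra). rewrite sqrt_square by (apply Rlt_le, Fpos; lra).
      replace ((x + x) / 2) with x by field. reflexivity.
Qed.

Lemma part4 c k R0 : c < 0 -> 0 < k -> 0 < R0 ->
  (k > -1 - c * R0 / 4 ->
   concave_pos (fun t => fB c k (R0 * (1 - exp (- t)))) /\
   forall x y, 0 < x < R0 -> 0 < y < R0 ->
     (fB c k x + fB c k y) / 2 <= fB c k (R0 - sqrt ((R0 - x) * (R0 - y))) /\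
     ((fB c k x + fB c k y) / 2 = fB c k (R0 - sqrt ((R0 - x) * (R0 - y))) <-> x = y)).
Proof.
  intros hc hk hR hkR.
  destruct (part4_abstract (fB c k) (PSeries (PS_derive (bcoef c k))) (PSeries (PS_derive (PS_derive (bcoef c k)))) R0 hR)
    as [H1 H2].
  - intros; apply dps, CVb; auto.
  - intros; apply dps, CV1; auto.
  - intros x hx. apply pos4; auto.
  - split; [exact H1|]. intros x y hx hy.
    set (s := ln R0 - ln (R0 - x)). set (u := ln R0 - ln (R0 - y)).
    assert (es : exp (- s) = (R0 - x) / R0).
    { unfold s. replace (- (ln R0 - ln (R0 - x))) with (ln (R0 - x) + - ln R0) by ring.
      rewrite exp_plus, exp_Ropp, !exp_ln by lra. reflexivity. }
    assert (eu : exp (- u) = (R0 - y) / R0).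
    { unfold u. replace (- (ln R0 - ln (R0 - y))) with (ln (R0 - y) + - ln R0) by ring.
      rewrite exp_plus, exp_Ropp, !exp_ln by lra. reflexivity. }
    assert (xs : R0 * (1 - exp (- s)) = x) by (rewrite es; field; lra).
    assert (yu : R0 * (1 - exp (- u)) = y) by (rewrite eu; field; lra).
    assert (hs : 0 < s) by (unfold s; assert (ln (R0 - x) < ln R0) by (apply ln_increasing; lra); lra).
    assert (hu : 0 < u) by (unfold u; assert (ln (R0 - y) < ln R0) by (apply ln_increasing; lra); lra).
    assert (mid : R0 * (1 - exp (- ((s + u) / 2))) = R0 - sqrt ((R0 - x) * (R0 - y))).
    { set (e := R0 * exp (- ((s + u) / 2))).
      assert (hee : (R0 - x) * (R0 - y) = e * e).
      { unfold e. replace (R0 * exp (- ((s + u) / 2)) * (R0 * exp (- ((s + u) / 2))))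
          with (R0 * R0 * (exp (- ((s + u) / 2)) * exp (- ((s + u) / 2)))) by ring.
        rewrite <- exp_plus. replace (- ((s + u) / 2) + - ((s + u) / 2)) with (- s + - u) by field.
        rewrite exp_plus, es, eu. field. lra. }
      rewrite hee, sqrt_square. unfold e; ring.
      unfold e. apply Rlt_le, Rmult_lt_0_compat; [lra|apply exp_pos]. }
    apply le_iff_of.
    + intros hxy. assert (s <> u) by (intro e; apply hxy; rewrite <- xs, <- yu, e; reflexivity).
      specialize (H2 s u hs hu H). rewrite xs, yu, mid in H2. exact H2.
    + intros <-. replace ((R0 - x) * (R0 - x)) with ((R0 - x) * (R0 - x)) by reflexivity.
      rewrite sqrt_square by lra. replace (R0 - (R0 - x)) with x by ring. field.
Qed.

Theorem theorem3p6 (c k R : R) :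
  c < 0 -> 0 < k -> 0 < R ->
  (* (1) *)
  (convex_pos (fun t => ln (fB c k (R * exp (- t)))) /\
   forall x y, 0 < x -> 0 < y ->
     fB c k (sqrt (x * y)) <= sqrt (fB c k x * fB c k y) /\
     (fB c k (sqrt (x * y)) = sqrt (fB c k x * fB c k y) <-> x = y)) /\
  (* (2) *)
  (concave_pos (fun x => ln (fB c k x)) /\
   forall x y, 0 < x -> 0 < y ->
     sqrt (fB c k x * fB c k y) <= fB c k ((x + y) / 2) /\
     (sqrt (fB c k x * fB c k y) = fB c k ((x + y) / 2) <-> x = y)) /\
  (* (3) *)
  (convex_pos (fB c k) /\
   forall x y, 0 < x -> 0 < y ->
     fB c k ((x + y) / 2) <= (fB c k x + fB c k y) / 2 /\
     (fB c k ((x + y) / 2) = (fB c k x + fB c k y) / 2 <-> x = y)) /\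
  (* (4) *)
  (k > -1 - c * R / 4 ->
   concave_pos (fun t => fB c k (R * (1 - exp (- t)))) /\
   forall x y, 0 < x < R -> 0 < y < R ->
     (fB c k x + fB c k y) / 2 <= fB c k (R - sqrt ((R - x) * (R - y))) /\
     ((fB c k x + fB c k y) / 2 = fB c k (R - sqrt ((R - x) * (R - y))) <-> x = y)).
Proof.
  intros hc hk hR.
  split; [apply part1; auto|].
  split; [apply part2; auto|].
  split; [apply part3; auto|].
  apply part4; auto.
Qed.
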